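(* Let $q>1$, $p=\frac{q}{q-1}$, and assume Hypothesis (H$_q$). Then for every $\theta>0$, $$\Big|f\Big(\frac{m(a+b)}{2}\Big)-\frac{\Gamma(\theta+1)2^{\theta-1}}{m^\theta(b-a)^\theta}\Big[J^\theta_{(\frac{m(a+b)}{2})^-}f(ma)+J^\theta_{(\frac{m(a+b)}{2})^+}f(mb)\Big]\Big|$$ $$\le\frac{m(b-a)}{4}\Big(\frac{1}{\theta p+1}\Big)^{\frac1p}\Big\{\Big(\frac{|f'(\frac{m(a+b)}2)|^q+\alpha m|f'(a)|^q}{\alpha+1}\Big)^{\frac1q}+\Big(\frac{|f'(\frac{m(a+b)}2)|^q+\alpha m|f'(b)|^q}{\alpha+1}\Big)^{\frac1q}\Big\}.$$
   Context: Let $\Gamma$ denote Euler's Gamma function. For $\theta>0$, $c=\frac{m(a+b)}{2}$: $J^\theta_{c^-}f(ma)=\frac{1}{\Gamma(\theta)}\int_{ma}^{c}(s-ma)^{\theta-1}f(s)\,ds$ and $J^\theta_{c^+}f(mb)=\frac{1}{\Gamma(\theta)}\int_{c}^{mb}(mb-s)^{\theta-1}f(s)\,ds$. $(\alpha,m)$-convexity: for $(\alpha,m)\in[0,1]\times(0,1]$ and an interval $K\subseteq[0,\infty)$, a function $g:K\to\mathbb{R}$ is $(\alpha,m)$-convex on $K$ if $g(tX+m(1-t)Y)\le t^\alpha g(X)+m(1-t^\alpha)g(Y)$ for all $X,Y\in K$ and $t\in[0,1]$ with $tX+m(1-t)Y\in K$ (convention $0^0=1$). Hypothesis (H$_q$):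 $I\subseteq[0,\infty)$ is an interval, $f:I\to\mathbb{R}$ is differentiable on the interior $I^\circ$, $m\in(0,1]$, $\alpha\in[0,1]$, $a<b$ with $ma,b\in I^\circ$, $f'$ is Lebesgue integrable on $[ma,mb]$, and $|f'|^q$ is $(\alpha,m)$-convex on $[ma,b]$. *)

(* Defs.v *)
From Stdlib Require Import Reals Lra ClassicalEpsilon.
Open Scope R_scope.

(* Real power with the convention 0^0 = 1 and 0^s = 0 for s <> 0;
   for x > 0 this is exp (s * ln x). Only used with nonnegative bases. *)
Definition rpow (x s : R) : R :=
  if Req_EM_T x 0 then (if Req_EM_T s 0 then 1 else 0) else Rpower x s.

Definition is_interval (I : R -> Prop) : Prop :=
  forall x y z, I x -> I z -> x <= y <= z -> I y.

Definition am_convex (alpha m : R) (K : R -> Prop) (g : R -> R) : Prop :=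
  forall X Y t, K X -> K Y -> 0 <= t <= 1 -> K (t * X + m * (1 - t) * Y) ->
    g (t * X + m * (1 - t) * Y) <= rpow t alpha * g X + m * (1 - rpow t alpha) * g Y.

(* Improper Riemann integral over (u, v], possibly singular at u:
   l = lim_{e -> 0+} int_{u+e}^{v} h *)
Definition is_imp_lo (h : R -> R) (u v l : R) : Prop :=
  (forall e, 0 < e < v - u -> inhabited (Riemann_integrable h (u + e) v)) /\
  forall eps, 0 < eps -> exists delta, 0 < delta /\
    forall e (pr : Riemann_integrable h (u + e) v),
      0 < e < delta -> e < v - u -> Rabs (RiemannInt pr - l) < eps.

(* Improper Riemann integral over [u, v), possibly singular at v *)
Definition is_imp_hi (h : R -> R) (u v l : R) : Prop :=
  (forall e, 0 < e < v - u -> inhabited (Riemann_integrable h u (v - e))) /\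
  forall eps, 0 < eps -> exists delta, 0 < delta /\
    forall e (pr : Riemann_integrable h u (v - e)),
      0 < e < delta -> e < v - u -> Rabs (RiemannInt pr - l) < eps.

(* Improper Riemann integral over (0, +oo) *)
Definition is_imp_0_inf (h : R -> R) (l : R) : Prop :=
  (forall e T, 0 < e <= T -> inhabited (Riemann_integrable h e T)) /\
  forall eps, 0 < eps -> exists delta M, 0 < delta /\
    forall e T (pr : Riemann_integrable h e T),
      0 < e < delta -> M < T -> e <= T -> Rabs (RiemannInt pr - l) < eps.

Definition imp_lo (h : R -> R) (u v : R) : R :=
  epsilon (inhabits 0) (fun l => is_imp_lo h u v l).
Definition imp_hi (h : R -> R) (u v : R) : R :=
  epsilon (inhabits 0) (fun l => is_imp_hi h u v l).

Definition Gamma (th : R) : R :=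
  epsilon (inhabits 0) (fun l => is_imp_0_inf (fun t => rpow t (th - 1) * exp (- t)) l).

(* Riemann-Liouville fractional integrals:
   J^th_{c-} f(u) = 1/Gamma th * int_u^c (s-u)^(th-1) f s ds
   J^th_{c+} f(v) = 1/Gamma th * int_c^v (v-s)^(th-1) f s ds *)
Definition J_left (th : R) (f : R -> R) (c u : R) : R :=
  / Gamma th * imp_lo (fun s => rpow (s - u) (th - 1) * f s) u c.
Definition J_right (th : R) (f : R -> R) (c v : R) : R :=
  / Gamma th * imp_hi (fun s => rpow (v - s) (th - 1) * f s) c v.

(* Main.v *)
Require Import Defs.
From Stdlib Require Import Reals Lra ClassicalEpsilon Classical.
From Coquelicot Require Import Coquelicot.
Open Scope R_scope.

Lemma cont_of_deriv (f : R -> R) x l : derivable_pt_lim f x l -> continuity_pt f x.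
Proof. intro H. apply derivable_continuous_pt. exists l; exact H. Qed.

Lemma deriv_bound (P K p k : R -> R) (a b : R) : a <= b ->
  (forall x, a <= x <= b -> derivable_pt_lim P x (p x)) ->
  (forall x, a <= x <= b -> derivable_pt_lim K x (k x)) ->
  (forall x, a <= x <= b -> Rabs (p x) <= k x) ->
  Rabs (P b - P a) <= K b - K a.
Proof.
  intros Hab HP HK Hb.
  assert (Hm : Rmin a b = a) by (apply Rmin_left; lra).
  assert (HM : Rmax a b = b) by (apply Rmax_right; lra).
  destruct (MVT_gen (fun x => P x - K x) a b (fun x => p x - k x)) as [c1 [Hc1 E1]].
  { intros x Hx. rewrite Hm, HM in Hx. apply is_derive_Reals. apply derivable_pt_lim_minus; [apply HP|apply HK]; lra. }
  { intros x Hx. rewrite Hm, HM in Hx. apply continuity_pt_minus; eapply cont_of_deriv; [apply HP|apply HK]; lra. }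
  destruct (MVT_gen (fun x => P x + K x) a b (fun x => p x + k x)) as [c2 [Hc2 E2]].
  { intros x Hx. rewrite Hm, HM in Hx. apply is_derive_Reals. apply derivable_pt_lim_plus; [apply HP|apply HK]; lra. }
  { intros x Hx. rewrite Hm, HM in Hx. apply continuity_pt_plus; eapply cont_of_deriv; [apply HP|apply HK]; lra. }
  rewrite Hm, HM in Hc1, Hc2. simpl in E1, E2.
  assert (B1 := Hb c1 Hc1). assert (B2 := Hb c2 Hc2).
  assert (S1 : (p c1 - k c1) * (b - a) <= 0).
  { apply Rmult_le_0_r; [|lra]. split_Rabs; lra. }
  assert (S2 : 0 <= (p c2 + k c2) * (b - a)).
  { apply Rmult_le_pos; [|lra]. split_Rabs; lra. }
  split_Rabs; lra.
Qed.

Lemma ball_R (x e y : R) : ball x e y <-> Rabs (y - x) < e.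
Proof. split; intro H; exact H. Qed.
Lemma minus_R (x y : R) : minus x y = x - y. Proof. reflexivity. Qed.
Lemma scal_R (x y : R) : scal x y = x * y. Proof. reflexivity. Qed.
Lemma zero_R : (zero : R) = 0. Proof. reflexivity. Qed.

Lemma Rpower_pos x s : 0 < Rpower x s.
Proof. unfold Rpower; apply exp_pos. Qed.

Lemma rpow_pos x s : 0 < x -> rpow x s = Rpower x s.
Proof. intro H. unfold rpow. destruct (Req_EM_T x 0); [lra|reflexivity]. Qed.

Lemma Rpower_minus1 y s : 0 < y -> Rpower y (s - 1) = Rpower y s / y.
Proof.
  intro H. unfold Rpower. replace ((s - 1) * ln y) with (s * ln y + - ln y) by ring.
  rewrite exp_plus, exp_Ropp, exp_ln by lra. reflexivity.
Qed.

Lemma deriv_eq f x l l' : derivable_pt_lim f x l -> l = l' -> derivable_pt_lim f x l'.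
Proof. intros H ->; exact H. Qed.

Lemma Rpow_shift_deriv u s x : u < x ->
  derivable_pt_lim (fun t => Rpower (t - u) s) x (s * Rpower (x - u) (s - 1)).
Proof.
  intro H.
  assert (H1 := derivable_pt_lim_comp (fun t => t - u) (fun y => Rpower y s) x 1
     (s * Rpower (x - u) (s - 1))).
  eapply deriv_eq. apply H1.
  - apply is_derive_Reals. auto_derive. all: auto. all: try ring.
  - apply derivable_pt_lim_power. lra.
Qed.

Lemma Rpow_small th eps : 0 < th -> 0 < eps ->
  exists d, 0 < d /\ forall e, 0 < e < d -> Rpower e th < eps.
Proof.
  intros Ht He. exists (Rpower eps (/ th)). split; [apply Rpower_pos|].
  intros e [H1 H2].
  replace eps with (Rpower (Rpower eps (/ th)) th) at 1.
  - apply Rlt_Rpower_l; lra.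
  - rewrite Rpower_mult. replace (/ th * th) with 1 by (field; lra). apply Rpower_1; lra.
Qed.

Lemma min3 a b c : 0 < a -> 0 < b -> 0 < c -> exists e, 0 < e /\ e < a /\ e < b /\ e < c.
Proof.
  intros Ha Hb Hc. exists (Rmin a (Rmin b c) / 2).
  assert (H1 := Rmin_l a (Rmin b c)). assert (H2 := Rmin_r a (Rmin b c)).
  assert (H3 := Rmin_l b c). assert (H4 := Rmin_r b c).
  assert (0 < Rmin a (Rmin b c)) by (apply Rmin_glb_lt; [lra| apply Rmin_glb_lt; lra]).
  lra.
Qed.

Lemma imp_lo_of_RInt h u v l :
  (forall e, 0 < e < v - u -> ex_RInt h (u + e) v) ->
  (forall eps, 0 < eps -> exists d, 0 < d /\ forall e, 0 < e < d -> e < v - u ->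
      Rabs (RInt h (u + e) v - l) < eps) ->
  is_imp_lo h u v l.
Proof.
  intros H1 H2. split.
  - intros e He. constructor. apply ex_RInt_Reals_0. auto.
  - intros eps Heps. destruct (H2 eps Heps) as [d [Hd Hd2]]. exists d. split; auto.
    intros e pr He1 He2. rewrite <- RInt_Reals. auto.
Qed.

Lemma imp_hi_of_RInt h u v l :
  (forall e, 0 < e < v - u -> ex_RInt h u (v - e)) ->
  (forall eps, 0 < eps -> exists d, 0 < d /\ forall e, 0 < e < d -> e < v - u ->
      Rabs (RInt h u (v - e) - l) < eps) ->
  is_imp_hi h u v l.
Proof.
  intros H1 H2. split.
  - intros e He. constructor. apply ex_RInt_Reals_0. auto.
  - intros eps Heps. destruct (H2 eps Heps) as [d [Hd Hd2]]. exists d. split; auto.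
    intros e pr He1 He2. rewrite <- RInt_Reals. auto.
Qed.

Lemma imp_lo_unique h u v l1 l2 : u < v -> is_imp_lo h u v l1 -> is_imp_lo h u v l2 -> l1 = l2.
Proof.
  intros Huv [I1 H1] [_ H2].
  destruct (Req_dec l1 l2) as [E|N]; auto. exfalso.
  set (eps := Rabs (l1 - l2) / 2).
  assert (Heps : 0 < eps) by (unfold eps; assert (0 < Rabs (l1 - l2)) by (apply Rabs_pos_lt; lra); lra).
  destruct (H1 eps Heps) as [d1 [Hd1 D1]]. destruct (H2 eps Heps) as [d2 [Hd2 D2]].
  destruct (min3 d1 d2 (v - u) Hd1 Hd2 ltac:(lra)) as (e & He1 & He2 & He3 & He4).
  destruct (I1 e ltac:(lra)) as [pr].
  specialize (D1 e pr ltac:(lra) ltac:(lra)). specialize (D2 e pr ltac:(lra) ltac:(lra)).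
  unfold eps in *. split_Rabs; lra.
Qed.

Lemma imp_hi_unique h u v l1 l2 : u < v -> is_imp_hi h u v l1 -> is_imp_hi h u v l2 -> l1 = l2.
Proof.
  intros Huv [I1 H1] [_ H2].
  destruct (Req_dec l1 l2) as [E|N]; auto. exfalso.
  set (eps := Rabs (l1 - l2) / 2).
  assert (Heps : 0 < eps) by (unfold eps; assert (0 < Rabs (l1 - l2)) by (apply Rabs_pos_lt; lra); lra).
  destruct (H1 eps Heps) as [d1 [Hd1 D1]]. destruct (H2 eps Heps) as [d2 [Hd2 D2]].
  destruct (min3 d1 d2 (v - u) Hd1 Hd2 ltac:(lra)) as (e & He1 & He2 & He3 & He4).
  destruct (I1 e ltac:(lra)) as [pr].
  specialize (D1 e pr ltac:(lra) ltac:(lra)). specialize (D2 e pr ltac:(lra) ltac:(lra)).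
  unfold eps in *. split_Rabs; lra.
Qed.

Lemma imp_lo_eq h u v l : u < v -> is_imp_lo h u v l -> imp_lo h u v = l.
Proof.
  intros Huv H. unfold imp_lo.
  apply (imp_lo_unique h u v); auto.
  apply (epsilon_spec (inhabits 0) (fun l => is_imp_lo h u v l)). exists l; exact H.
Qed.

Lemma imp_hi_eq h u v l : u < v -> is_imp_hi h u v l -> imp_hi h u v = l.
Proof.
  intros Huv H. unfold imp_hi.
  apply (imp_hi_unique h u v); auto.
  apply (epsilon_spec (inhabits 0) (fun l => is_imp_hi h u v l)). exists l; exact H.
Qed.


Lemma min4 a b c d : 0 < a -> 0 < b -> 0 < c -> 0 < d ->
  exists e, 0 < e /\ e < a /\ e < b /\ e < c /\ e < d.
Proof.
  intros Ha Hb Hc Hd. destruct (min3 a b (Rmin c d) Ha Hb) as (e & H1 & H2 & H3 & H4).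
  { apply Rmin_glb_lt; lra. }
  exists e. assert (H5 := Rmin_l c d). assert (H6 := Rmin_r c d). lra.
Qed.

Lemma RInt_ext_R (f g : R -> R) a b : (forall x, Rmin a b < x < Rmax a b -> f x = g x) ->
  RInt f a b = RInt g a b.
Proof. intro H. exact (RInt_ext f g a b H). Qed.
Lemma ex_RInt_ext_R (f g : R -> R) a b : (forall x, Rmin a b < x < Rmax a b -> f x = g x) ->
  ex_RInt f a b -> ex_RInt g a b.
Proof. intros H1 H2. exact (ex_RInt_ext f g a b H1 H2). Qed.
Lemma RInt_scal_R f a b l : ex_RInt f a b -> RInt (fun x => l * f x) a b = l * RInt f a b.
Proof. intro H. exact (RInt_scal f a b l H). Qed.
Lemma RInt_minus_R f g a b : ex_RInt f a b -> ex_RInt g a b ->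
  RInt (fun x => f x - g x) a b = RInt f a b - RInt g a b.
Proof. intros H1 H2. exact (RInt_minus f g a b H1 H2). Qed.
Lemma RInt_plus_R f g a b : ex_RInt f a b -> ex_RInt g a b ->
  RInt (fun x => f x + g x) a b = RInt f a b + RInt g a b.
Proof. intros H1 H2. exact (RInt_plus f g a b H1 H2). Qed.
Lemma RInt_Chasles_R f a b c : ex_RInt f a b -> ex_RInt f b c ->
  RInt f a b + RInt f b c = RInt f a c.
Proof. intros H1 H2. exact (RInt_Chasles f a b c H1 H2). Qed.
Lemma ex_RInt_scal_R f a b l : ex_RInt f a b -> ex_RInt (fun x => l * f x) a b.
Proof. intro H. exact (ex_RInt_scal f a b l H). Qed.

Section Half.
Variables (F F' K k : R -> R) (u c c' th K0 : R).
Hypotheses (Huc : u < c) (Hcc : c < c') (Hth : 0 < th)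
  (HF : forall x, u <= x <= c' -> derivable_pt_lim F x (F' x))
  (HK : forall x, u < x <= c -> derivable_pt_lim K x (k x))
  (Hb : forall x, u < x <= c -> Rabs (Rpower (x - u) th * F' x) <= k x)
  (HK0 : forall eps, 0 < eps -> exists d, 0 < d /\ forall e, 0 < e < d -> Rabs (K (u + e) - K0) < eps).

Let w := fun x => Rpower (x - u) (th - 1).
Let h2 := fun x => w x * F x.

Lemma wcont x : u < x -> continuity_pt w x.
Proof. intro H. eapply cont_of_deriv. apply Rpow_shift_deriv. exact H. Qed.

Lemma h2cont x : u < x <= c' -> continuity_pt h2 x.
Proof.
  intro H. unfold h2. apply continuity_pt_mult. apply wcont; lra.
  eapply cont_of_deriv. apply HF. lra.
Qed.

Lemma h2int a b : u < a -> u < b -> a <= c' -> b <= c' -> ex_RInt h2 a b.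
Proof.
  intros. apply (@ex_RInt_continuous R_CompleteNormedModule). intros z Hz. apply continuity_pt_filterlim.
  apply h2cont. assert (u < Rmin a b) by (apply Rmin_glb_lt; lra).
  assert (Rmax a b <= c') by (apply Rmax_lub; lra). lra.
Qed.

Lemma wint a b : u < a -> u < b -> ex_RInt w a b.
Proof.
  intros. apply (@ex_RInt_continuous R_CompleteNormedModule). intros z Hz. apply continuity_pt_filterlim.
  apply wcont. assert (u < Rmin a b) by (apply Rmin_glb_lt; lra). lra.
Qed.

Lemma Hbd e : 0 < e < c - u ->
  Rabs ((Rpower (c - u) th * F c - th * RInt h2 (u + e) c) - Rpower e th * F (u + e))
  <= K c - K (u + e).
Proof.
  intro He.
  set (Phi := fun s => Rpower (s - u) th * F s - th * RInt h2 (u + e) s).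
  assert (D := deriv_bound Phi K (fun x => Rpower (x - u) th * F' x) k (u + e) c ltac:(lra)).
  assert (E1 : Phi (u + e) = Rpower e th * F (u + e)).
  { unfold Phi. cbv beta. rewrite (RInt_point (u + e) h2 : RInt h2 (u + e) (u + e) = 0). replace (u + e - u) with e by ring. ring. }
  rewrite <- E1. apply D.
  - intros x Hx.
    assert (P1 := derivable_pt_lim_mult (fun s => Rpower (s - u) th) F x _ _
                   (Rpow_shift_deriv u th x ltac:(lra)) (HF x ltac:(lra))).
    assert (P2 : derivable_pt_lim (fun s => RInt h2 (u + e) s) x (h2 x)).
    { apply is_derive_Reals. apply (is_derive_RInt h2 (RInt h2 (u + e)) (u + e) x).
      - assert (Hp : 0 < Rmin (x - u) (c' - x)) by (apply Rmin_glb_lt; lra).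
        exists (mkposreal _ Hp). intros y Hy. assert (Hy2 : Rabs (y - x) < Rmin (x - u) (c' - x)) by exact Hy.
        assert (H1 := Rmin_l (x - u) (c' - x)). assert (H2 := Rmin_r (x - u) (c' - x)).
        apply (@RInt_correct R_CompleteNormedModule). apply h2int; split_Rabs; lra.
      - apply continuity_pt_filterlim. apply h2cont. lra. }
    assert (P3 := derivable_pt_lim_scal _ th x _ P2).
    assert (P4 := derivable_pt_lim_minus _ _ x _ _ P1 P3).
    eapply deriv_eq. exact P4. unfold h2, w. ring.
  - intros x Hx. apply HK. lra.
  - intros x Hx. apply Hb. lra.
Qed.

Lemma Iw e : 0 < e < c - u -> RInt w (u + e) c = (Rpower (c - u) th - Rpower e th) / th.
Proof.
  intro He. apply is_RInt_unique.
  assert (H := @is_RInt_derive R_CompleteNormedModule (fun x => / th * Rpower (x - u) th) w (u + e) c).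
  replace ((Rpower (c - u) th - Rpower e th) / th) with
    (minus ((fun x => / th * Rpower (x - u) th) c) ((fun x => / th * Rpower (x - u) th) (u + e))).
  - apply H.
    + intros x Hx. assert (u < Rmin (u + e) c) by (apply Rmin_glb_lt; lra).
      apply is_derive_Reals. eapply deriv_eq.
      apply derivable_pt_lim_scal. apply Rpow_shift_deriv. lra.
      unfold w. field. lra.
    + intros x Hx. assert (u < Rmin (u + e) c) by (apply Rmin_glb_lt; lra).
      apply continuity_pt_filterlim. apply wcont. lra.
  - rewrite minus_R. cbv beta. replace (u + e - u) with e by ring. change (/ th * Rpower (c - u) th - / th * Rpower e th = (Rpower (c - u) th - Rpower e th) / th). field. lra.
Qed.

Lemma Mbound : exists M, 0 <= M /\ forall x, u <= x <= c -> Rabs (F x) <= M.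
Proof.
  destruct (continuity_ab_maj (fun x => Rabs (F x)) u c) as [Mx [H1 H2]].
  - lra.
  - intros x Hx. apply (continuity_pt_comp F Rabs). eapply cont_of_deriv. apply HF. lra. apply Rcontinuity_abs.
  - exists (Rabs (F Mx)). split; [apply Rabs_pos|]. exact H1.
Qed.

Lemma half_result : exists L, is_imp_lo (fun s => rpow (s - u) (th - 1) * F s) u c L /\
   Rabs (Rpower (c - u) th * F c - th * L) <= K c - K0.
Proof.
  destruct Mbound as [M [HM0 HM]].
  set (g := fun x => w x * (F x + M)).
  assert (gint : forall a b, u < a -> u < b -> a <= c' -> b <= c' -> ex_RInt g a b).
  { intros. apply (@ex_RInt_continuous R_CompleteNormedModule). intros z Hz.
    assert (u < Rmin a b) by (apply Rmin_glb_lt; lra).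
    assert (Rmax a b <= c') by (apply Rmax_lub; lra).
    apply continuity_pt_filterlim. unfold g. apply continuity_pt_mult.
    - apply wcont. lra.
    - apply continuity_pt_plus. eapply cont_of_deriv. apply HF. lra.
      apply continuity_pt_const. intros ? ?; reflexivity. }
  assert (gpos : forall x, u < x <= c -> 0 <= g x).
  { intros x Hx. unfold g, w. apply Rmult_le_pos. left; apply Rpower_pos.
    assert (HMx := HM x ltac:(lra)). split_Rabs; lra. }
  set (J := fun e => RInt g (u + e) c).
  assert (Ih2 : forall e, 0 < e < c - u -> RInt h2 (u + e) c = J e - M * RInt w (u + e) c).
  { intros e He. unfold J. rewrite <- RInt_scal_R by (apply wint; lra).
    rewrite <- RInt_minus_R.
    - apply RInt_ext_R. intros x Hx. unfold h2, g. ring.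
    - apply gint; lra.
    - apply ex_RInt_scal_R. apply wint; lra. }
  assert (Jbound : forall e, 0 < e < c - u -> J e <= 2 * M * (Rpower (c - u) th / th)).
  { intros e He. apply Rle_trans with (RInt (fun x => (2 * M) * w x) (u + e) c).
    - apply RInt_le. lra. apply gint; lra. apply ex_RInt_scal_R, wint; lra.
      intros x Hx. unfold g. assert (0 < w x) by (apply Rpower_pos).
      assert (HMx := HM x ltac:(lra)). assert (F x <= M) by (split_Rabs; lra). nra.
    - rewrite RInt_scal_R by (apply wint; lra). rewrite Iw by lra.
      assert (0 < Rpower e th) by apply Rpower_pos.
      unfold Rdiv. apply Rmult_le_compat_l. lra.
      apply Rmult_le_compat_r. left; apply Rinv_0_lt_compat; lra. lra. }
  assert (Jmono : forall e1 e2, 0 < e1 <= e2 -> e2 < c - u -> J e2 <= J e1).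
  { intros e1 e2 H1 H2. unfold J. rewrite <- (RInt_Chasles_R g (u + e1) (u + e2) c).
    assert (0 <= RInt g (u + e1) (u + e2)).
    { apply RInt_ge_0. lra. apply gint; lra. intros x Hx. apply gpos. lra. }
    lra. apply gint; lra. apply gint; lra. }
  set (E := fun y => exists e, 0 < e < c - u /\ y = J e).
  destruct (completeness E) as [l [Hl1 Hl2]].
  { exists (2 * M * (Rpower (c - u) th / th)). intros y [e [He ->]]. apply Jbound; auto. }
  { exists (J ((c - u) / 2)). exists ((c - u) / 2). split; [lra|auto]. }
  assert (Approx : forall eps, 0 < eps -> exists e0, 0 < e0 < c - u /\ l - eps < J e0).
  { intros eps Heps. destruct (classic (exists e0, 0 < e0 < c - u /\ l - eps < J e0)) as [H|H]; auto.
    exfalso. assert (l <= l - eps); [|lra]. apply Hl2. intros y [e [He ->]].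
    destruct (Rle_lt_dec (J e) (l - eps)) as [H1|H1]; auto. exfalso. apply H. exists e. auto. }
  set (L := l - M * (Rpower (c - u) th / th)).
  assert (Conv : forall eps, 0 < eps -> exists d, 0 < d /\ forall e, 0 < e < d -> e < c - u ->
             Rabs (RInt h2 (u + e) c - L) < eps).
  { intros eps Heps. destruct (Approx (eps / 2)) as [e0 [He0 Hl0]]. lra.
    destruct (Rpow_small th (eps * th / (2 * (M + 1)))) as [d2 [Hd2 Hsm]]. lra.
    { apply Rdiv_lt_0_compat; [apply Rmult_lt_0_compat|]; lra. }
    exists (Rmin e0 d2). split. apply Rmin_glb_lt; lra.
    intros e He He'. assert (e < e0) by (assert (Hm1 := Rmin_l e0 d2); lra).
    assert (e < d2) by (assert (Hm2 := Rmin_r e0 d2); lra).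
    rewrite Ih2, Iw by lra.
    assert (J e0 <= J e) by (apply Jmono; lra).
    assert (J e <= l) by (apply Hl1; exists e; split; [lra|reflexivity]).
    assert (S := Hsm e ltac:(lra)).
    set (R0 := Rpower e th) in *. assert (0 < R0) by apply Rpower_pos.
    assert (Hq1 : (M + 1) * R0 < (M + 1) * (eps * th / (2 * (M + 1)))) by (apply Rmult_lt_compat_l; lra).
    replace ((M + 1) * (eps * th / (2 * (M + 1)))) with (eps * th / 2) in Hq1 by (field; lra).
    assert (Hq2 : M * R0 / th < eps / 2).
    { apply (Rmult_lt_reg_r th); [lra|]. replace (M * R0 / th * th) with (M * R0) by (field; lra).
      replace (eps / 2 * th) with (eps * th / 2) by field. nra. }
    assert (Hq3 : 0 <= M * R0 / th).
    { unfold Rdiv. apply Rmult_le_pos; [apply Rmult_le_pos; lra| left; apply Rinv_0_lt_compat; lra]. }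
    unfold L.
    replace (J e - M * ((Rpower (c - u) th - R0) / th) - (l - M * (Rpower (c - u) th / th)))
      with (J e - l + M * R0 / th) by (field; lra).
    split_Rabs; lra. }
  assert (Heq : forall e x, 0 < e -> Rmin (u + e) c < x < Rmax (u + e) c ->
            h2 x = rpow (x - u) (th - 1) * F x).
  { intros e x He Hx. assert (u < Rmin (u + e) c) by (apply Rmin_glb_lt; lra).
    unfold h2, w. rewrite rpow_pos by lra. reflexivity. }
  exists L. split.
  - apply imp_lo_of_RInt.
    + intros e He. apply (ex_RInt_ext_R h2). intros x Hx. apply (Heq e); lra. apply h2int; lra.
    + intros eps Heps. destruct (Conv eps Heps) as [d [Hd Hc]]. exists d. split; auto.
      intros e He He'. rewrite <- (RInt_ext_R h2). apply Hc; auto.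
      intros x Hx. apply (Heq e); lra.
  - destruct (Rle_dec (Rabs (Rpower (c - u) th * F c - th * L)) (K c - K0)) as [ok|nok]; auto.
    exfalso.
    set (g0 := Rabs (Rpower (c - u) th * F c - th * L) - (K c - K0)).
    assert (Hg0 : 0 < g0) by (unfold g0; lra).
    destruct (Conv (g0 / (4 * th))) as [d1 [Hd1 C1]].
    { apply Rdiv_lt_0_compat; lra. }
    destruct (Rpow_small th (g0 / (4 * (M + 1)))) as [d2 [Hd2 C2]]. lra.
    { apply Rdiv_lt_0_compat; lra. }
    destruct (HK0 (g0 / 4)) as [d3 [Hd3 C3]]. lra.
    destruct (min4 d1 d2 d3 (c - u)) as (e & He0 & He1 & He2 & He3 & He4); try lra.
    specialize (C1 e ltac:(lra) He4). specialize (C2 e ltac:(lra)). specialize (C3 e ltac:(lra)).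
    assert (B := Hbd e ltac:(lra)).
    set (I0 := RInt h2 (u + e) c) in *.
    assert (T1 : Rabs (th * I0 - th * L) < g0 / 4).
    { replace (th * I0 - th * L) with (th * (I0 - L)) by ring.
      rewrite Rabs_mult, (Rabs_pos_eq th) by lra.
      apply Rlt_le_trans with (th * (g0 / (4 * th))).
      apply Rmult_lt_compat_l; lra. right; field; lra. }
    assert (T2 : Rabs (Rpower e th * F (u + e)) < g0 / 4).
    { assert (0 < Rpower e th) by apply Rpower_pos.
      rewrite Rabs_mult, (Rabs_pos_eq (Rpower e th)) by lra.
      assert (HF1 : Rabs (F (u + e)) <= M) by (apply HM; lra).
      assert (H4 : Rpower e th * (M + 1) < g0 / (4 * (M + 1)) * (M + 1)) by (apply Rmult_lt_compat_r; lra).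
      replace (g0 / (4 * (M + 1)) * (M + 1)) with (g0 / 4) in H4 by (field; lra).
      assert (0 <= Rabs (F (u + e))) by apply Rabs_pos.
      nra. }
    unfold g0 in *. split_Rabs; lra.
Qed.

End Half.

Lemma RInt_swap_R f a b : ex_RInt f a b -> RInt f b a = - RInt f a b.
Proof. intro H. symmetry. exact (opp_RInt_swap f a b H). Qed.
Lemma RInt_opp_R f a b : ex_RInt f a b -> RInt (fun x => - f x) a b = - RInt f a b.
Proof. intro H. exact (RInt_opp f a b H). Qed.
Lemma ex_RInt_opp_R f a b : ex_RInt f a b -> ex_RInt (fun x => - f x) a b.
Proof. intro H. exact (ex_RInt_opp f a b H). Qed.

Lemma lo_to_hi (g h : R -> R) u v l : u < v -> (forall x, g x = h (u + v - x)) ->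
  is_imp_lo g u v l -> is_imp_hi h u v l.
Proof.
  intros Huv Hgh [I1 H1].
  assert (key : forall e, 0 < e < v - u -> ex_RInt h u (v - e) /\ RInt h u (v - e) = RInt g (u + e) v).
  { intros e He. destruct (I1 e He) as [pr]. assert (Ex := ex_RInt_Reals_1 _ _ _ pr).
    assert (Ex2 : ex_RInt g (-1 * (v - e) + (u + v)) (-1 * u + (u + v))).
    { replace (-1 * (v - e) + (u + v)) with (u + e) by ring.
      replace (-1 * u + (u + v)) with v by ring. exact Ex. }
    assert (E1 := ex_RInt_comp_lin g (-1) (u + v) (v - e) u Ex2).
    assert (E2 := RInt_comp_lin g (-1) (u + v) (v - e) u Ex2).
    replace (-1 * (v - e) + (u + v)) with (u + e) in E2 by ring.
    replace (-1 * u + (u + v)) with v in E2 by ring.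
    assert (Eq : forall y, (scal (-1) (g (-1 * y + (u + v))) : R) = - h y).
    { intro y. rewrite scal_R, Hgh. replace (u + v - (-1 * y + (u + v))) with y by ring. ring. }
    assert (E3 : ex_RInt (fun y => - h y) (v - e) u).
    { apply (ex_RInt_ext_R (fun y => scal (-1) (g (-1 * y + (u + v))))). intros; apply Eq. exact E1. }
    assert (E4 : ex_RInt h (v - e) u).
    { apply (ex_RInt_ext_R (fun y => - - h y)). intros; ring. apply ex_RInt_opp_R. exact E3. }
    split.
    - apply ex_RInt_swap. exact E4.
    - rewrite (RInt_ext_R _ (fun y => - h y) (v - e) u) in E2 by (intros; apply Eq).
      rewrite <- E2. rewrite RInt_opp_R by exact E4. rewrite (RInt_swap_R h (v - e) u E4). try reflexivity. }
  apply imp_hi_of_RInt.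
  - intros e He. apply key; auto.
  - intros eps Heps. destruct (H1 eps Heps) as [d [Hd Hc]]. exists d. split; auto.
    intros e He He'. destruct (key e ltac:(lra)) as [_ ->].
    destruct (I1 e ltac:(lra)) as [pr]. rewrite (RInt_Reals _ _ _ pr). apply Hc; auto.
Qed.

Lemma exp_le x y : x <= y -> exp x <= exp y.
Proof. intro H. destruct (Rle_lt_or_eq_dec x y H) as [H1|H1]. left; apply exp_increasing; auto. right; rewrite H1; auto. Qed.

Lemma ln_le_m1 y : 0 < y -> ln y <= y - 1.
Proof. intro H. assert (H1 := exp_ineq1_le (ln y)). rewrite exp_ln in H1 by auto. lra. Qed.

Lemma Rpower_base1 s : Rpower 1 s = 1.
Proof. unfold Rpower. rewrite ln_1, Rmult_0_r. apply exp_0. Qed.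

Lemma powexp s : exists C, forall t, 1 <= t -> Rpower t s <= exp (t / 2 + C).
Proof.
  set (b := Rabs s + 1). assert (Hb : 0 < b) by (unfold b; assert (H := Rabs_pos s); lra).
  exists (b * (ln (2 * b) - 1)). intros t Ht. unfold Rpower. apply exp_le.
  assert (L0 : 0 <= ln t) by (rewrite <- ln_1; apply ln_le; lra).
  assert (L1 : s * ln t <= b * ln t). { apply Rmult_le_compat_r; auto. unfold b. assert (H := Rle_abs s). lra. }
  assert (L2 : ln t = ln (t / (2 * b)) + ln (2 * b)).
  { rewrite <- ln_mult. f_equal. field. lra. apply Rdiv_lt_0_compat; lra. lra. }
  assert (L3 : ln (t / (2 * b)) <= t / (2 * b) - 1) by (apply ln_le_m1; apply Rdiv_lt_0_compat; lra).
  assert (L4 : b * ln t <= b * (t / (2 * b) - 1 + ln (2 * b))) by (rewrite L2; apply Rmult_le_compat_l; lra).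
  replace (b * (t / (2 * b) - 1 + ln (2 * b))) with (t / 2 + b * (ln (2 * b) - 1)) in L4 by (field; lra).
  lra.
Qed.

Lemma imp_0_inf_of_RInt h l :
  (forall e T, 0 < e <= T -> ex_RInt h e T) ->
  (forall eps, 0 < eps -> exists d M, 0 < d /\ forall e T, 0 < e < d -> M < T -> e <= T ->
     Rabs (RInt h e T - l) < eps) ->
  is_imp_0_inf h l.
Proof.
  intros H1 H2. split.
  - intros e T He. constructor. apply ex_RInt_Reals_0. auto.
  - intros eps Heps. destruct (H2 eps Heps) as [d [M [Hd Hc]]]. exists d, M. split; auto.
    intros e T pr H3 H4 H5. rewrite <- RInt_Reals. auto.
Qed.

Lemma imp_0_inf_unique h l1 l2 : is_imp_0_inf h l1 -> is_imp_0_inf h l2 -> l1 = l2.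
Proof.
  intros [I1 H1] [_ H2]. destruct (Req_dec l1 l2) as [E|N]; auto. exfalso.
  set (eps := Rabs (l1 - l2) / 2).
  assert (Heps : 0 < eps) by (unfold eps; assert (0 < Rabs (l1 - l2)) by (apply Rabs_pos_lt; lra); lra).
  destruct (H1 eps Heps) as [d1 [M1 [Hd1 D1]]]. destruct (H2 eps Heps) as [d2 [M2 [Hd2 D2]]].
  destruct (min3 d1 d2 1) as (e & He1 & He2 & He3 & He4); try lra.
  set (T := Rmax (Rmax M1 M2) 1 + 1).
  assert (HT : M1 < T /\ M2 < T /\ e <= T).
  { unfold T. assert (X1 := Rmax_l (Rmax M1 M2) 1). assert (X2 := Rmax_r (Rmax M1 M2) 1).
    assert (X3 := Rmax_l M1 M2). assert (X4 := Rmax_r M1 M2). lra. }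
  destruct HT as (HT1 & HT2 & HT3).
  destruct (I1 e T ltac:(lra)) as [pr].
  specialize (D1 e T pr ltac:(lra) HT1 HT3). specialize (D2 e T pr ltac:(lra) HT2 HT3).
  unfold eps in *. split_Rabs; lra.
Qed.

Lemma Gamma_eq th l : is_imp_0_inf (fun t => rpow t (th - 1) * exp (- t)) l -> Gamma th = l.
Proof.
  intro H. unfold Gamma. apply (imp_0_inf_unique (fun t => rpow t (th - 1) * exp (- t))); auto.
  apply (epsilon_spec (inhabits 0) (fun l => is_imp_0_inf (fun t => rpow t (th - 1) * exp (- t)) l)).
  exists l; exact H.
Qed.

Lemma expneg_deriv x : derivable_pt_lim (fun t => exp (- t)) x (- exp (- x)).
Proof. apply is_derive_Reals. auto_derive; auto. ring. Qed.

Lemma expneg2_deriv x : derivable_pt_lim (fun t => -2 * exp (- t / 2)) x (exp (- x / 2)).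
Proof. apply is_derive_Reals. auto_derive; auto. set (E := exp _). change RinvImpl.Rinv with Rinv. field. Qed.

Lemma expneg_half_cont x : continuity_pt (fun t => exp (- t / 2)) x.
Proof.
  eapply cont_of_deriv with (l := - / 2 * exp (- x / 2)). apply is_derive_Reals. auto_derive; auto.
  unfold Rdiv. change RinvImpl.Rinv with Rinv. field.
Qed.

Lemma pow_deriv s x : 0 < x -> derivable_pt_lim (fun t => Rpower t s) x (s * Rpower x (s - 1)).
Proof. intro H. apply derivable_pt_lim_power. auto. Qed.

Lemma RInt_pow0 th a b : 0 < th -> 0 < a <= b ->
  RInt (fun t => Rpower t (th - 1)) a b = (Rpower b th - Rpower a th) / th.
Proof.
  intros Hth Hab. apply is_RInt_unique.
  assert (H := @is_RInt_derive R_CompleteNormedModule (fun x => / th * Rpower x th) (fun t => Rpower t (th - 1)) a b).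
  replace ((Rpower b th - Rpower a th) / th) with
    (minus ((fun x => / th * Rpower x th) b) ((fun x => / th * Rpower x th) a)).
  - apply H.
    + intros x Hx. assert (0 < Rmin a b) by (apply Rmin_glb_lt; lra).
      apply is_derive_Reals. eapply deriv_eq.
      apply derivable_pt_lim_scal. apply pow_deriv. lra.
      field. lra.
    + intros x Hx. assert (0 < Rmin a b) by (apply Rmin_glb_lt; lra).
      apply continuity_pt_filterlim. eapply cont_of_deriv. apply pow_deriv. lra.
  - rewrite minus_R. cbv beta.
    change (/ th * Rpower b th - / th * Rpower a th = (Rpower b th - Rpower a th) / th). field. lra.
Qed.

Lemma RInt_expneg a b : RInt (fun t => exp (- t / 2)) a b = -2 * exp (- b / 2) - -2 * exp (- a / 2).
Proof.
  apply is_RInt_unique.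
  assert (H := @is_RInt_derive R_CompleteNormedModule (fun t => -2 * exp (- t / 2)) (fun t => exp (- t / 2)) a b).
  apply H.
  - intros x Hx. apply is_derive_Reals. apply expneg2_deriv.
  - intros x Hx. apply continuity_pt_filterlim. apply expneg_half_cont.
Qed.

Section GammaSec.
Variable th : R.
Hypothesis Hth : 0 < th.
Let g2 := fun t => Rpower t (th - 1) * exp (- t).

Lemma g2deriv t : 0 < t -> continuity_pt g2 t.
Proof.
  intro H. unfold g2. apply continuity_pt_mult.
  - eapply cont_of_deriv. apply pow_deriv. auto.
  - eapply cont_of_deriv. apply expneg_deriv.
Qed.

Lemma g2int a b : 0 < a -> 0 < b -> ex_RInt g2 a b.
Proof.
  intros. apply (@ex_RInt_continuous R_CompleteNormedModule). intros z Hz.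
  assert (0 < Rmin a b) by (apply Rmin_glb_lt; lra).
  apply continuity_pt_filterlim. apply g2deriv. lra.
Qed.

Lemma g2pos t : 0 < g2 t.
Proof. unfold g2. apply Rmult_lt_0_compat. apply Rpower_pos. apply exp_pos. Qed.

Let G := fun e T => RInt g2 e T.

Lemma Gnonneg a b : 0 < a <= b -> 0 <= G a b.
Proof. intros H. apply RInt_ge_0. lra. apply g2int; lra. intros; left; apply g2pos. Qed.

Lemma Gmono e' e T T' : 0 < e' <= e -> e <= T -> T <= T' -> G e T <= G e' T'.
Proof.
  intros H1 H2 H3. unfold G.
  rewrite <- (RInt_Chasles_R g2 e' e T'), <- (RInt_Chasles_R g2 e T T').
  - assert (X1 := Gnonneg e' e ltac:(lra)). assert (X2 := Gnonneg T T' ltac:(lra)).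
    unfold G in *. lra.
  - apply g2int; lra.
  - apply g2int; lra.
  - apply g2int; lra.
  - apply g2int; lra.
Qed.

Lemma Gbound : exists B, forall e T, 0 < e <= T -> G e T <= B.
Proof.
  destruct (powexp (th - 1)) as [C HC].
  exists (1 / th + 2 * exp C * exp (- 1 / 2)). intros e T He.
  set (e' := Rmin e 1). set (T' := Rmax T 1).
  assert (E1 : 0 < e' <= e /\ e' <= 1) by (unfold e'; split; [split; [apply Rmin_glb_lt; lra| apply Rmin_l] | apply Rmin_r]).
  assert (E2 : T <= T' /\ 1 <= T') by (unfold T'; split; [apply Rmax_l|apply Rmax_r]).
  apply Rle_trans with (G e' T'). apply Gmono; lra.
  unfold G. rewrite <- (RInt_Chasles_R g2 e' 1 T') by (apply g2int; lra).
  assert (B1 : RInt g2 e' 1 <= 1 / th).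
  { apply Rle_trans with (RInt (fun t => Rpower t (th - 1)) e' 1).
    - apply RInt_le. lra. apply g2int; lra.
      apply (@ex_RInt_continuous R_CompleteNormedModule). intros z Hz.
      assert (0 < Rmin e' 1) by (apply Rmin_glb_lt; lra).
      apply continuity_pt_filterlim. eapply cont_of_deriv. apply pow_deriv. lra.
      intros x Hx. unfold g2. assert (0 < Rpower x (th - 1)) by apply Rpower_pos.
      assert (exp (- x) <= 1) by (rewrite <- exp_0; apply exp_le; lra).
      assert (0 < exp (- x)) by apply exp_pos. nra.
    - rewrite RInt_pow0 by lra. rewrite Rpower_base1.
      assert (0 < Rpower e' th) by apply Rpower_pos.
      unfold Rdiv. apply Rmult_le_compat_r. left; apply Rinv_0_lt_compat; lra. lra. }
  assert (B2 : RInt g2 1 T' <= 2 * exp C * exp (- 1 / 2)).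
  { apply Rle_trans with (RInt (fun t => exp C * exp (- t / 2)) 1 T').
    - apply RInt_le. lra. apply g2int; lra.
      apply ex_RInt_scal_R. apply (@ex_RInt_continuous R_CompleteNormedModule). intros z Hz.
      apply continuity_pt_filterlim. apply expneg_half_cont.
      intros x Hx. unfold g2. assert (H1 := HC x ltac:(lra)).
      assert (0 < exp (- x)) by apply exp_pos.
      apply Rle_trans with (exp (x / 2 + C) * exp (- x)).
      apply Rmult_le_compat_r; lra.
      rewrite <- exp_plus, <- exp_plus. right. f_equal. field.
    - rewrite RInt_scal_R. rewrite RInt_expneg.
      assert (0 < exp (- T' / 2)) by apply exp_pos. assert (0 < exp C) by apply exp_pos.
      replace (- 1 / 2) with (- (1) / 2) by field. nra.
      apply (@ex_RInt_continuous R_CompleteNormedModule). intros z Hz.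
      apply continuity_pt_filterlim. apply expneg_half_cont. }
  lra.
Qed.

Lemma Gexists : exists l, 0 < l /\ forall eps, 0 < eps -> exists d M, 0 < d /\
   forall e T, 0 < e < d -> M < T -> e <= T -> Rabs (G e T - l) < eps.
Proof.
  destruct Gbound as [B HB].
  set (S := fun y => exists e T, 0 < e <= T /\ y = G e T).
  destruct (completeness S) as [l [Hl1 Hl2]].
  { exists B. intros y (e & T & H & ->). auto. }
  { exists (G 1 2). exists 1, 2. split; [lra|auto]. }
  exists l. split.
  - apply Rlt_le_trans with (G 1 2).
    + unfold G. assert (Z : RInt (fun _ : R => 0) 1 2 = 0).
      { rewrite RInt_const. apply Rmult_0_r. }
      rewrite <- Z. apply RInt_lt. lra.
      * intros x Hx. apply continuity_pt_filterlim. apply g2deriv. lra.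
      * intros x Hx. apply continuity_pt_filterlim. apply continuity_pt_const. intros ? ?; reflexivity.
      * intros x Hx. apply g2pos.
    + apply Hl1. exists 1, 2. split; [lra|auto].
  - intros eps Heps.
    destruct (classic (exists e0 T0, 0 < e0 <= T0 /\ l - eps < G e0 T0)) as [[e0 [T0 [H1 H2]]]|H].
    + exists e0, T0. split; [lra|]. intros e T He HT HeT.
      assert (G e0 T0 <= G e T) by (apply Gmono; lra).
      assert (G e T <= l) by (apply Hl1; exists e, T; split; [lra|auto]).
      split_Rabs; lra.
    + exfalso. assert (l <= l - eps); [|lra]. apply Hl2. intros y (e & T & He & ->).
      destruct (Rle_lt_dec (G e T) (l - eps)) as [X|X]; auto. exfalso; apply H; exists e, T; auto.
Qed.

Let g3 := fun t => Rpower t th * exp (- t).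

Lemma g3key e T : 0 < e <= T ->
  RInt g3 e T = (Rpower e th * exp (- e) - Rpower T th * exp (- T)) + th * G e T.
Proof.
  intros H.
  assert (Hc3 : forall x, 0 < x -> continuity_pt g3 x).
  { intros x Hx. unfold g3. apply continuity_pt_mult.
    eapply cont_of_deriv. apply pow_deriv. auto. eapply cont_of_deriv. apply expneg_deriv. }
  assert (i3 : ex_RInt g3 e T).
  { apply (@ex_RInt_continuous R_CompleteNormedModule). intros z Hz.
    assert (0 < Rmin e T) by (apply Rmin_glb_lt; lra).
    apply continuity_pt_filterlim. apply Hc3. lra. }
  assert (D : RInt (fun t => g3 t - th * g2 t) e T = (- Rpower T th * exp (- T)) - (- Rpower e th * exp (- e))).
  { apply is_RInt_unique.
    assert (H1 := @is_RInt_derive R_CompleteNormedModule (fun t => - Rpower t th * exp (- t)) (fun t => g3 t - th * g2 t) e T).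
    replace ((- Rpower T th * exp (- T)) - (- Rpower e th * exp (- e))) with
      (minus ((fun t => - Rpower t th * exp (- t)) T) ((fun t => - Rpower t th * exp (- t)) e)) by (rewrite minus_R; reflexivity).
    apply H1.
    - intros x Hx. assert (0 < Rmin e T) by (apply Rmin_glb_lt; lra).
      apply is_derive_Reals. eapply deriv_eq.
      exact (derivable_pt_lim_mult (fun t => - Rpower t th) (fun t => exp (- t)) x _ _
               (derivable_pt_lim_opp (fun t => Rpower t th) x _ (pow_deriv th x ltac:(lra))) (expneg_deriv x)).
      unfold g3, g2. rewrite Rpower_minus1 by lra. field. lra.
    - intros x Hx. assert (0 < Rmin e T) by (apply Rmin_glb_lt; lra).
      apply continuity_pt_filterlim. apply continuity_pt_minus. apply Hc3. lra.
      apply continuity_pt_scal. apply g2deriv. lra. }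
  rewrite RInt_minus_R, RInt_scal_R in D.
  - unfold G. lra.
  - apply g2int; lra.
  - exact i3.
  - apply ex_RInt_scal_R. apply g2int; lra.
Qed.

Lemma Gamma_succ_exists : exists l, 0 < l /\ is_imp_0_inf (fun t => rpow t (th - 1) * exp (- t)) l /\
   is_imp_0_inf (fun t => rpow t (th + 1 - 1) * exp (- t)) (th * l).
Proof.
  destruct Gexists as [l [Hl Conv]]. exists l. split; auto.
  assert (E2 : forall e T x, 0 < e <= T -> Rmin e T < x < Rmax e T -> g2 x = rpow x (th - 1) * exp (- x)).
  { intros e T x H Hx. assert (0 < Rmin e T) by (apply Rmin_glb_lt; lra).
    unfold g2. rewrite rpow_pos by lra. reflexivity. }
  assert (E3 : forall e T x, 0 < e <= T -> Rmin e T < x < Rmax e T -> g3 x = rpow x (th + 1 - 1) * exp (- x)).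
  { intros e T x H Hx. assert (0 < Rmin e T) by (apply Rmin_glb_lt; lra).
    unfold g3. rewrite rpow_pos by lra. replace (th + 1 - 1) with th by ring. reflexivity. }
  split.
  - apply imp_0_inf_of_RInt.
    + intros e T H. apply (ex_RInt_ext_R g2). intros x Hx. apply (E2 e T); auto. apply g2int; lra.
    + intros eps Heps. destruct (Conv eps Heps) as [d [M [Hd Hc]]]. exists d, M. split; auto.
      intros e T He HT HeT. rewrite <- (RInt_ext_R g2). apply Hc; auto.
      intros x Hx. apply (E2 e T); auto. lra.
  - apply imp_0_inf_of_RInt.
    + intros e T H. apply (ex_RInt_ext_R g3). intros x Hx. apply (E3 e T); auto.
      apply (@ex_RInt_continuous R_CompleteNormedModule). intros z Hz.
      assert (0 < Rmin e T) by (apply Rmin_glb_lt; lra).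
      apply continuity_pt_filterlim. unfold g3. apply continuity_pt_mult.
      eapply cont_of_deriv. apply pow_deriv. lra. eapply cont_of_deriv. apply expneg_deriv.
    + intros eps Heps.
      destruct (Conv (eps / (3 * th))) as [d1 [M1 [Hd1 C1]]].
      { apply Rdiv_lt_0_compat; lra. }
      destruct (Rpow_small th (eps / 3)) as [d2 [Hd2 C2]]; try lra.
      destruct (powexp th) as [C HC].
      set (M2 := Rmax 1 (2 * (C - ln (eps / 3)))).
      exists (Rmin d1 d2), (Rmax M1 M2). split. apply Rmin_glb_lt; lra.
      intros e T He HT HeT.
      assert (X1 := Rmin_l d1 d2). assert (X2 := Rmin_r d1 d2).
      assert (X3 := Rmax_l M1 M2). assert (X4 := Rmax_r M1 M2).
      assert (X5 := Rmax_l 1 (2 * (C - ln (eps / 3)))). assert (X6 := Rmax_r 1 (2 * (C - ln (eps / 3)))).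
      fold M2 in X5, X6.
      rewrite <- (RInt_ext_R g3) by (intros x Hx; apply (E3 e T); auto; lra).
      rewrite g3key by lra.
      assert (A1 : 0 <= Rpower e th * exp (- e) < eps / 3).
      { assert (Y1 := C2 e ltac:(lra)). assert (0 < Rpower e th) by apply Rpower_pos.
        assert (exp (- e) <= 1) by (rewrite <- exp_0; apply exp_le; lra).
        assert (0 < exp (- e)) by apply exp_pos. split; nra. }
      assert (A2 : 0 <= Rpower T th * exp (- T) < eps / 3).
      { assert (Y1 := HC T ltac:(lra)). assert (0 < Rpower T th) by apply Rpower_pos.
        assert (0 < exp (- T)) by apply exp_pos. split. nra.
        apply Rle_lt_trans with (exp (T / 2 + C) * exp (- T)). apply Rmult_le_compat_r; lra.
        rewrite <- exp_plus. rewrite <- (exp_ln (eps / 3)) by lra. apply exp_increasing. lra. }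
      assert (A3 : Rabs (th * G e T - th * l) < eps / 3).
      { replace (th * G e T - th * l) with (th * (G e T - l)) by ring.
        rewrite Rabs_mult, (Rabs_pos_eq th) by lra.
        apply Rlt_le_trans with (th * (eps / (3 * th))).
        apply Rmult_lt_compat_l; [lra|]. apply C1; lra. right; field; lra. }
      split_Rabs; lra.
Qed.

End GammaSec.

Lemma Gamma_facts th : 0 < th -> Gamma (th + 1) = th * Gamma th /\ 0 < Gamma th.
Proof.
  intro Hth. destruct (Gamma_succ_exists th Hth) as [l [Hl [H1 H2]]].
  rewrite (Gamma_eq th l H1), (Gamma_eq (th + 1) (th * l) H2). auto.
Qed.

Lemma bernoulli_r x s : 0 < x -> 0 < s < 1 -> Rpower x s <= s * x + 1 - s.
Proof.
  intros Hx Hs.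
  set (h := fun y => s * y + 1 - s - Rpower y s).
  assert (D : forall y, 0 < y -> derivable_pt_lim h y (s - s * Rpower y (s - 1))).
  { intros y Hy. unfold h. eapply deriv_eq.
    apply derivable_pt_lim_minus.
    apply derivable_pt_lim_minus. apply derivable_pt_lim_plus.
    apply derivable_pt_lim_scal. apply derivable_pt_lim_id. apply derivable_pt_lim_const.
    apply derivable_pt_lim_const. apply pow_deriv. auto. ring. }
  assert (H1 : h 1 = 0) by (unfold h; rewrite Rpower_base1; ring).
  destruct (MVT_gen h 1 x (fun y => s - s * Rpower y (s - 1))) as [xi [Hxi E]].
  - intros y Hy. assert (0 < Rmin 1 x) by (apply Rmin_glb_lt; lra). apply is_derive_Reals. apply D. lra.
  - intros y Hy. assert (0 < Rmin 1 x) by (apply Rmin_glb_lt; lra). eapply cont_of_deriv. apply D. lra.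
  - assert (0 < Rmin 1 x) by (apply Rmin_glb_lt; lra).
    assert (Hxi0 : 0 < xi) by lra.
    rewrite H1 in E.
    assert (Hhx : h x >= 0).
    { cbv beta in E. replace (h x) with ((s - s * Rpower xi (s - 1)) * (x - 1)) by lra. destruct (Rle_lt_dec 1 x) as [Hle|Hlt].
      - rewrite Rmin_left in Hxi by lra. rewrite Rmax_right in Hxi by lra.
        assert (Rpower xi (s - 1) <= 1).
        { unfold Rpower. apply Rle_trans with (exp 0); [apply exp_le | rewrite exp_0; lra].
          assert (0 <= ln xi) by (rewrite <- ln_1; apply ln_le; lra). nra. }
        apply Rle_ge, Rmult_le_pos; nra.
      - rewrite Rmin_right in Hxi by lra. rewrite Rmax_left in Hxi by lra.
        assert (1 <= Rpower xi (s - 1)).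
        { unfold Rpower. apply Rle_trans with (exp 0); [rewrite exp_0; lra | apply exp_le].
          assert (ln xi <= 0) by (rewrite <- ln_1; apply ln_le; lra). nra. }
        assert (s - s * Rpower xi (s - 1) <= 0) by nra.
        apply Rle_ge. nra. }
    unfold h in Hhx. cbv beta in Hhx. lra.
Qed.

Lemma amgm X Y s : 0 < X -> 0 < Y -> 0 < s < 1 ->
  Rpower X s * Rpower Y (1 - s) <= s * X + (1 - s) * Y.
Proof.
  intros HX HY Hs.
  assert (B := bernoulli_r (X / Y) s ltac:(apply Rdiv_lt_0_compat; lra) Hs).
  assert (E : Rpower X s * Rpower Y (1 - s) = Y * Rpower (X / Y) s).
  { unfold Rpower. rewrite ln_div by lra. rewrite <- exp_plus.
    replace (s * ln X + (1 - s) * ln Y) with (ln Y + s * (ln X - ln Y)) by ring.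
    rewrite exp_plus, exp_ln by lra. reflexivity. }
  rewrite E. apply Rle_trans with (Y * (s * (X / Y) + 1 - s)).
  apply Rmult_le_compat_l; lra. right. field. lra.
Qed.

Lemma rpow0 s : s <> 0 -> rpow 0 s = 0.
Proof. intro H. unfold rpow. destruct (Req_EM_T 0 0) as [_|N]; [|lra]. destruct (Req_EM_T s 0); [lra|auto]. Qed.

Lemma rpow_nonneg x s : 0 <= rpow x s.
Proof.
  unfold rpow. destruct (Req_EM_T x 0). destruct (Req_EM_T s 0); lra. left; apply Rpower_pos.
Qed.

Lemma young a b p q : 0 < a -> 0 <= b -> 1 < p -> 1 < q -> 1 / p + 1 / q = 1 ->
  a * b <= Rpower a p / p + rpow b q / q.
Proof.
  intros Ha Hb Hp Hq Hpq.
  assert (0 < Rpower a p) by apply Rpower_pos.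
  assert (0 <= rpow b q) by apply rpow_nonneg.
  assert (0 < Rpower a p / p) by (apply Rdiv_lt_0_compat; lra).
  assert (0 <= rpow b q / q) by (unfold Rdiv; apply Rmult_le_pos; [lra| left; apply Rinv_0_lt_compat; lra]).
  destruct (Req_dec b 0) as [E|N].
  - subst b. rewrite Rmult_0_r. lra.
  - rewrite rpow_pos by lra.
    assert (Hs : 0 < 1 / p < 1).
    { split. apply Rdiv_lt_0_compat; lra. apply (Rmult_lt_reg_r p); [lra|]. unfold Rdiv. field_simplify; lra. }
    assert (A := amgm (Rpower a p) (Rpower b q) (1 / p) ltac:(apply Rpower_pos) ltac:(apply Rpower_pos) Hs).
    rewrite !Rpower_mult in A.
    replace (p * (1 / p)) with 1 in A by (field; lra).
    replace (q * (1 - 1 / p)) with 1 in A.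
    2:{ replace (1 - 1 / p) with (1 / q) by lra. field. lra. }
    rewrite !Rpower_1 in A by lra.
    replace (1 - 1 / p) with (1 / q) in A by lra.
    unfold Rdiv in *. lra.
Qed.

Lemma Rpower_div z l s : 0 < z -> 0 < l -> Rpower (z / l) s = Rpower z s / Rpower l s.
Proof.
  intros. unfold Rpower. rewrite ln_div by lra. unfold Rdiv. rewrite <- exp_Ropp, <- exp_plus.
  f_equal. ring.
Qed.

Lemma young2 w z l p q : 0 < w -> 0 <= z -> 0 < l -> 1 < p -> 1 < q -> 1 / p + 1 / q = 1 ->
  w * z <= Rpower l p * Rpower w p / p + rpow z q / (q * Rpower l q).
Proof.
  intros Hw Hz Hl Hp Hq Hpq.
  assert (Y := young (l * w) (z / l) p q ltac:(apply Rmult_lt_0_compat; lra)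
                 ltac:(unfold Rdiv; apply Rmult_le_pos; [lra|left; apply Rinv_0_lt_compat; lra]) Hp Hq Hpq).
  replace (l * w * (z / l)) with (w * z) in Y by (field; lra).
  rewrite <- Rpower_mult_distr in Y by lra.
  assert (0 < Rpower l q) by apply Rpower_pos.
  destruct (Req_dec z 0) as [E|N].
  - subst z. replace (0 / l) with 0 in Y by (field; lra). rewrite !rpow0 in * by lra.
    unfold Rdiv in *. rewrite Rmult_0_l in *. lra.
  - rewrite !rpow_pos in * by (try apply Rdiv_lt_0_compat; lra).
    rewrite Rpower_div in Y by lra.
    replace (Rpower z q / Rpower l q / q) with (Rpower z q / (q * Rpower l q)) in Y by (field; lra).
    exact Y.
Qed.

Lemma opt_id P Q p q : 0 < P -> 0 < Q -> 1 < p -> 1 < q -> 1 / p + 1 / q = 1 ->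
  Rpower (Q / P) (1 / q) * P / p + Q / (q * Rpower (Q / P) (1 / p)) = Rpower P (1 / p) * Rpower Q (1 / q).
Proof.
  intros HP HQ Hp Hq Hpq. unfold Rpower. rewrite ln_div by lra.
  transitivity (exp (1 / q * (ln Q - ln P)) * exp (ln P) / p + exp (ln Q) / (q * exp (1 / p * (ln Q - ln P)))).
  { rewrite !exp_ln by lra. reflexivity. }
  generalize (ln P) (ln Q). intros a b.
  rewrite <- exp_plus.
  replace (1 / q * (b - a) + a) with (1 / p * a + 1 / q * b) by (replace (1 / p) with (1 - 1 / q) by lra; ring).
  assert (E2 : exp b / (q * exp (1 / p * (b - a))) = exp (1 / p * a + 1 / q * b) / q).
  { assert (0 < exp (1 / p * (b - a))) by apply exp_pos.
    replace b with ((1 / p * a + 1 / q * b) + 1 / p * (b - a)) at 1 by (replace (1 / p) with (1 - 1 / q) by lra; ring).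
    rewrite exp_plus. field. split; lra. }
  rewrite E2, <- exp_plus.
  replace (exp (1 / p * a + 1 / q * b) / p + exp (1 / p * a + 1 / q * b) / q)
    with (exp (1 / p * a + 1 / q * b) * (1 / p + 1 / q)) by (field; lra).
  rewrite Hpq. ring.
Qed.

Lemma opt Z P Q p q : 0 < P -> 0 <= Q -> 1 < p -> 1 < q -> 1 / p + 1 / q = 1 ->
  (forall l, 0 < l -> Z <= Rpower l p * P / p + Q / (q * Rpower l q)) ->
  Z <= Rpower P (1 / p) * rpow Q (1 / q).
Proof.
  intros HP HQ Hp Hq Hpq H.
  destruct (Req_dec Q 0) as [E|N].
  - subst Q. rewrite rpow0. 2:{ assert (0 < 1 / q) by (apply Rdiv_lt_0_compat; lra). lra. }
    rewrite Rmult_0_r. destruct (Rle_lt_dec Z 0) as [X|X]; auto. exfalso.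
    assert (Hz : 0 < Z * p / (2 * P)) by (apply Rdiv_lt_0_compat; nra).
    assert (Hl := H (Rpower (Z * p / (2 * P)) (1 / p)) ltac:(apply Rpower_pos)).
    rewrite Rpower_mult in Hl. replace (1 / p * p) with 1 in Hl by (field; lra).
    rewrite Rpower_1 in Hl by lra.
    assert (0 < Rpower (Rpower (Z * p / (2 * P)) (1 / p)) q) by apply Rpower_pos.
    replace (0 / (q * Rpower (Rpower (Z * p / (2 * P)) (1 / p)) q)) with 0 in Hl by (field; lra).
    replace (Z * p / (2 * P) * P / p) with (Z / 2) in Hl by (field; lra). lra.
  - assert (HQ' : 0 < Q) by lra. rewrite rpow_pos by lra.
    assert (Hpq2 : p * q = p + q).
    { assert (E : (1 / p + 1 / q) * (p * q) = 1 * (p * q)) by (rewrite Hpq; ring).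
      replace ((1 / p + 1 / q) * (p * q)) with (q + p) in E by (field; lra). lra. }
    set (l := Rpower (Q / P) (1 / (p + q))).
    assert (Hl := H l ltac:(apply Rpower_pos)).
    unfold l in Hl. rewrite !Rpower_mult in Hl.
    replace (1 / (p + q) * p) with (1 / q) in Hl.
    2:{ rewrite <- Hpq2. field. split; lra. }
    replace (1 / (p + q) * q) with (1 / p) in Hl.
    2:{ rewrite <- Hpq2. field. split; lra. }
    rewrite <- opt_id by lra. exact Hl.
Qed.

Lemma lim0_comb a1 a2 a3 s1 s2 D : 0 < s1 -> 0 < s2 -> 0 < D ->
  forall eps, 0 < eps -> exists d, 0 < d /\ forall e, 0 < e < d ->
    Rabs (a1 * Rpower e s1 + a2 * Rpower (e / D) s2 + a3 * e) < eps.
Proof.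
  intros H1 H2 HD eps Heps.
  set (M := Rabs a1 + Rabs a2 + Rabs a3 + 1).
  assert (HM : 0 < M) by (unfold M; assert (X1 := Rabs_pos a1); assert (X2 := Rabs_pos a2); assert (X3 := Rabs_pos a3); lra).
  assert (He3 : 0 < eps / (3 * M)) by (apply Rdiv_lt_0_compat; lra).
  destruct (Rpow_small s1 (eps / (3 * M)) H1 He3) as [d1 [Hd1 C1]].
  destruct (Rpow_small s2 (eps / (3 * M)) H2 He3) as [d2 [Hd2 C2]].
  destruct (min3 d1 (D * d2) (eps / (3 * M))) as (d & Hd & X1 & X2 & X3); auto.
  apply Rmult_lt_0_compat; lra.
  exists d. split; auto. intros e He.
  assert (R1 := C1 e ltac:(lra)).
  assert (R2 := C2 (e / D) ltac:(split; [apply Rdiv_lt_0_compat; lra| apply (Rmult_lt_reg_r D); [lra|]; unfold Rdiv; rewrite Rmult_assoc, Rinv_l by lra; lra])).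
  assert (P1 : 0 < Rpower e s1) by apply Rpower_pos.
  assert (P2 : 0 < Rpower (e / D) s2) by apply Rpower_pos.
  assert (B1 : Rabs a1 <= M) by (unfold M; assert (X4 := Rabs_pos a2); assert (X5 := Rabs_pos a3); lra).
  assert (B2 : Rabs a2 <= M) by (unfold M; assert (X4 := Rabs_pos a1); assert (X5 := Rabs_pos a3); lra).
  assert (B3 : Rabs a3 <= M) by (unfold M; assert (X4 := Rabs_pos a1); assert (X5 := Rabs_pos a2); lra).
  assert (T1 : Rabs (a1 * Rpower e s1) < eps / 3).
  { rewrite Rabs_mult, (Rabs_pos_eq (Rpower e s1)) by lra.
    apply Rle_lt_trans with (M * Rpower e s1). apply Rmult_le_compat_r; lra.
    replace (eps / 3) with (M * (eps / (3 * M))) by (field; lra). apply Rmult_lt_compat_l; lra. }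
  assert (T2 : Rabs (a2 * Rpower (e / D) s2) < eps / 3).
  { rewrite Rabs_mult, (Rabs_pos_eq (Rpower (e / D) s2)) by lra.
    apply Rle_lt_trans with (M * Rpower (e / D) s2). apply Rmult_le_compat_r; lra.
    replace (eps / 3) with (M * (eps / (3 * M))) by (field; lra). apply Rmult_lt_compat_l; lra. }
  assert (T3 : Rabs (a3 * e) < eps / 3).
  { rewrite Rabs_mult, (Rabs_pos_eq e) by lra.
    apply Rle_lt_trans with (M * e). apply Rmult_le_compat_r; lra.
    replace (eps / 3) with (M * (eps / (3 * M))) by (field; lra). apply Rmult_lt_compat_l; lra. }
  split_Rabs; lra.
Qed.

Lemma Rpow_scaled_deriv u D s x : 0 < D -> u < x ->
  derivable_pt_lim (fun t => Rpower ((t - u) / D) s) x (s * Rpower ((x - u) / D) (s - 1) * / D).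
Proof.
  intros HD Hx.
  assert (H1 := derivable_pt_lim_comp (fun t => (t - u) / D) (fun y => Rpower y s) x (/ D)
     (s * Rpower ((x - u) / D) (s - 1))).
  eapply deriv_eq. apply H1.
  - apply is_derive_Reals. auto_derive; auto. change RinvImpl.Rinv with Rinv. field. lra.
  - apply derivable_pt_lim_power. apply Rdiv_lt_0_compat; lra.
  - reflexivity.
Qed.

Lemma half_final (F F' : R -> R) (u c0 c' th al m A B p q : R) :
  u < c0 -> c0 < c' -> 0 < th -> 0 <= al -> 0 < m -> 0 <= A -> 0 <= B ->
  1 < p -> 1 < q -> 1 / p + 1 / q = 1 ->
  (forall x, u <= x <= c' -> derivable_pt_lim F x (F' x)) ->
  (forall x, u < x <= c0 -> rpow (Rabs (F' x)) q <=
      Rpower ((x - u) / (c0 - u)) al * A + m * (1 - Rpower ((x - u) / (c0 - u)) al) * B) ->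
  exists L, is_imp_lo (fun s => rpow (s - u) (th - 1) * F s) u c0 L /\
   Rabs (Rpower (c0 - u) th * F c0 - th * L) <=
   Rpower (Rpower (c0 - u) (th * p + 1) / (th * p + 1)) (1 / p) *
   rpow ((c0 - u) * (A + al * m * B) / (al + 1)) (1 / q).
Proof.
  intros Huc Hcc Hth Hal Hm HA HB Hp Hq Hpq HF Hconv.
  set (d := c0 - u). assert (Hd : 0 < d) by (unfold d; lra).
  set (P := Rpower d (th * p + 1) / (th * p + 1)).
  set (Q := d * (A + al * m * B) / (al + 1)).
  assert (HP : 0 < P) by (unfold P; apply Rdiv_lt_0_compat; [apply Rpower_pos| nra]).
  assert (HQ : 0 <= Q) by (unfold Q; apply Rmult_le_pos; [apply Rmult_le_pos; [lra| ]| left; apply Rinv_0_lt_compat; lra]; assert (0 <= al * m * B) by (apply Rmult_le_pos; [apply Rmult_le_pos|]; lra); lra).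
  assert (Main : forall l, 0 < l -> exists L, is_imp_lo (fun s => rpow (s - u) (th - 1) * F s) u c0 L /\
     Rabs (Rpower (c0 - u) th * F c0 - th * L) <= Rpower l p * P / p + Q / (q * Rpower l q)).
  { intros l Hl.
    assert (Hlq : 0 < Rpower l q) by apply Rpower_pos.
    set (K := fun x => Rpower l p / (p * (th * p + 1)) * Rpower (x - u) (th * p + 1) +
          / (q * Rpower l q) * ((A - m * B) * d / (al + 1) * Rpower ((x - u) / d) (al + 1) + m * B * (x - u))).
    set (k := fun x => Rpower l p * Rpower (x - u) (th * p) / p +
          (Rpower ((x - u) / d) al * A + m * (1 - Rpower ((x - u) / d) al) * B) / (q * Rpower l q)).
    destruct (half_result F F' K k u c0 c' th 0 Huc Hcc Hth HF) as [L [HL1 HL2]].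
    - intros x Hx. unfold K, k. eapply deriv_eq.
      apply derivable_pt_lim_plus.
      apply derivable_pt_lim_scal. apply Rpow_shift_deriv. lra.
      apply derivable_pt_lim_scal. apply derivable_pt_lim_plus.
      apply derivable_pt_lim_scal. apply Rpow_scaled_deriv; lra.
      apply derivable_pt_lim_scal. apply derivable_pt_lim_minus. apply derivable_pt_lim_id. apply derivable_pt_lim_const.
      replace (th * p + 1 - 1) with (th * p) by ring. replace (al + 1 - 1) with al by ring.
      field. repeat split; try lra. nra.
    - intros x Hx. unfold k.
      assert (Hw : 0 < Rpower (x - u) th) by apply Rpower_pos.
      rewrite Rabs_mult, (Rabs_pos_eq (Rpower (x - u) th)) by lra.
      assert (Y := young2 (Rpower (x - u) th) (Rabs (F' x)) l p q Hw (Rabs_pos _) Hl Hp Hq Hpq).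
      rewrite Rpower_mult in Y.
      assert (Cv := Hconv x Hx). fold d in Cv.
      assert (rpow (Rabs (F' x)) q / (q * Rpower l q) <=
              (Rpower ((x - u) / d) al * A + m * (1 - Rpower ((x - u) / d) al) * B) / (q * Rpower l q)).
      { unfold Rdiv. apply Rmult_le_compat_r; [left; apply Rinv_0_lt_compat; nra | exact Cv]. }
      lra.
    - intros eps Heps.
      destruct (lim0_comb (Rpower l p / (p * (th * p + 1))) (/ (q * Rpower l q) * ((A - m * B) * d / (al + 1)))
                 (/ (q * Rpower l q) * (m * B)) (th * p + 1) (al + 1) d ltac:(nra) ltac:(lra) Hd eps Heps)
        as [dd [Hdd C]].
      exists dd. split; auto. intros e He. specialize (C e He).
      unfold K. replace (u + e - u) with e by ring. rewrite Rminus_0_r.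
      replace (Rpower l p / (p * (th * p + 1)) * Rpower e (th * p + 1) +
        / (q * Rpower l q) * ((A - m * B) * d / (al + 1) * Rpower (e / d) (al + 1) + m * B * e))
        with (Rpower l p / (p * (th * p + 1)) * Rpower e (th * p + 1) +
        / (q * Rpower l q) * ((A - m * B) * d / (al + 1)) * Rpower (e / d) (al + 1) +
        / (q * Rpower l q) * (m * B) * e) by ring.
      exact C.
    - exists L. split; auto.
      replace (Rpower l p * P / p + Q / (q * Rpower l q)) with (K c0 - 0); auto.
      unfold K, P, Q. fold d. replace (d / d) with 1 by (field; lra). rewrite Rpower_base1.
      field. repeat split; try lra. nra. }
  destruct (Main 1 ltac:(lra)) as [L [HL1 _]].
  exists L. split; auto.
  apply opt; auto.
  intros l Hl. destruct (Main l Hl) as [L' [HL1' HL2']].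
  assert (E := imp_lo_unique _ u c0 L L' Huc HL1 HL1'). rewrite E. exact HL2'.
Qed.

Lemma rpow_mult_l x y s : 0 < x -> 0 <= y -> s <> 0 -> rpow (x * y) s = Rpower x s * rpow y s.
Proof.
  intros Hx Hy Hs. destruct (Req_dec y 0) as [E|N].
  - subst y. rewrite Rmult_0_r, !rpow0 by auto. ring.
  - rewrite !rpow_pos by nra. rewrite Rpower_mult_distr by lra. reflexivity.
Qed.

Lemma interior_between (I : R -> Prop) x y z : is_interval I -> interior I x -> interior I z ->
  x <= y <= z -> interior I y.
Proof.
  intros HI Hx Hz Hy.
  assert (Ix : I x). { destruct Hx as [d Hd]. apply Hd. unfold disc. rewrite Rminus_diag, Rabs_R0. apply cond_pos. }
  assert (Iz : I z). { destruct Hz as [d Hd]. apply Hd. unfold disc. rewrite Rminus_diag, Rabs_R0. apply cond_pos. }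
  destruct (Req_dec y x) as [E|N1]; [subst; auto|].
  destruct (Req_dec y z) as [E|N2]; [subst; auto|].
  assert (Hp : 0 < Rmin (y - x) (z - y)) by (apply Rmin_glb_lt; lra).
  exists (mkposreal _ Hp). intros w Hw. unfold disc in Hw. simpl in Hw.
  assert (H1 := Rmin_l (y - x) (z - y)). assert (H2 := Rmin_r (y - x) (z - y)).
  apply (HI x w z); auto. split_Rabs; lra.
Qed.

Theorem mainTheorem12 (I : R -> Prop) (f f' : R -> R) (m alpha a b q theta : R) :
  is_interval I ->
  (forall x, I x -> 0 <= x) ->
  (forall x, interior I x -> derivable_pt_lim f x (f' x)) ->
  0 < m <= 1 ->
  0 <= alpha <= 1 ->
  a < b ->
  interior I (m * a) ->
  interior I b ->
  am_convex alpha m (fun x => m * a <= x <= b) (fun x => rpow (Rabs (f' x)) q) ->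
  1 < q ->
  0 < theta ->
  let p := q / (q - 1) in
  let c := m * (a + b) / 2 in
  Rabs (f c - Gamma (theta + 1) * rpow 2 (theta - 1) / (rpow m theta * rpow (b - a) theta)
                * (J_left theta f c (m * a) + J_right theta f c (m * b)))
  <= m * (b - a) / 4 * rpow (1 / (theta * p + 1)) (1 / p) *
     ( rpow ((rpow (Rabs (f' c)) q + alpha * m * rpow (Rabs (f' a)) q) / (alpha + 1)) (1 / q)
     + rpow ((rpow (Rabs (f' c)) q + alpha * m * rpow (Rabs (f' b)) q) / (alpha + 1)) (1 / q) ).
Proof.
  intros HI HI0 Hder Hm Hal Hab Hma Hb Hconv Hq Hth p c.
  assert (Hma0 : 0 < m * a).
  { destruct Hma as [dd Hdd]. assert (Hdp := cond_pos dd).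
    assert (HIx : I (m * a - dd / 2)).
    { apply Hdd. unfold disc. replace (m * a - dd / 2 - m * a) with (- (dd / 2)) by ring.
      rewrite Rabs_Ropp, Rabs_pos_eq; lra. }
    assert (H1 := HI0 _ HIx). lra. }
  assert (Ha0 : 0 < a). { destruct (Rle_lt_dec a 0) as [X|X]; auto. nra. }
  assert (Hmb : m * b <= b) by nra.
  assert (Hmab : m * a < m * b) by nra.
  set (d := m * (b - a) / 2).
  assert (Hd : 0 < d) by (unfold d; nra).
  assert (Ec1 : c - m * a = d) by (unfold c, d; field).
  assert (Ec2 : m * b - c = d) by (unfold c, d; field).
  assert (Hder2 : forall x, m * a <= x <= b -> derivable_pt_lim f x (f' x)).
  { intros x Hx. apply Hder. apply (interior_between I (m * a) x b); auto. }
  assert (Hp : 1 < p).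
  { unfold p. apply (Rmult_lt_reg_r (q - 1)); [lra|]. unfold Rdiv. rewrite Rmult_assoc, Rinv_l by lra. lra. }
  assert (Hpq : 1 / p + 1 / q = 1) by (unfold p; field; lra).
  set (A := rpow (Rabs (f' c)) q). set (B1 := rpow (Rabs (f' a)) q). set (B2 := rpow (Rabs (f' b)) q).
  assert (HA : 0 <= A) by apply rpow_nonneg.
  assert (HB1' : 0 <= B1) by apply rpow_nonneg.
  assert (HB2' : 0 <= B2) by apply rpow_nonneg.
  assert (Kc : m * a <= c <= b) by lra.
  assert (Ka : m * a <= a <= b) by nra.
  assert (Kb : m * a <= b <= b) by lra.
  destruct (half_final f f' (m * a) c b theta alpha m A B1 p q) as [L1 [HL1 HB1]]; try lra.
  { intros x Hx. apply Hder2. lra. }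
  { intros x Hx. rewrite Ec1.
    set (t := (x - m * a) / d).
    assert (Ht : 0 < t <= 1).
    { unfold t. split. apply Rdiv_lt_0_compat; lra.
      apply (Rmult_le_reg_r d); [lra|]. unfold Rdiv. rewrite Rmult_assoc, Rinv_l by lra. lra. }
    assert (Hpt : t * c + m * (1 - t) * a = x).
    { unfold t. replace c with (m * a + d) by lra. field. lra. }
    assert (Hc := Hconv c a t Kc Ka ltac:(lra) ltac:(cbv beta; rewrite Hpt; lra)).
    cbv beta in Hc. rewrite Hpt in Hc. rewrite (rpow_pos t) in Hc by lra. exact Hc. }
  set (F := fun x => f (c + m * b - x)). set (F' := fun x => - f' (c + m * b - x)).
  destruct (half_final F F' c (m * b) (m * b + d) theta alpha m A B2 p q) as [L2 [HL2 HB2]]; try lra.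
  { intros x Hx. unfold F, F'.
    assert (D1 := derivable_pt_lim_comp (fun x => c + m * b - x) f x (-1) (f' (c + m * b - x))).
    eapply deriv_eq. apply D1.
    - apply is_derive_Reals. auto_derive. all: auto. all: try ring.
    - apply Hder2. lra.
    }
  { intros x Hx. rewrite Ec2.
    set (t := (x - c) / d).
    assert (Ht : 0 < t <= 1).
    { unfold t. split. apply Rdiv_lt_0_compat; lra.
      apply (Rmult_le_reg_r d); [lra|]. unfold Rdiv. rewrite Rmult_assoc, Rinv_l by lra. lra. }
    assert (Hpt : t * c + m * (1 - t) * b = c + m * b - x).
    { unfold t. assert (E : m * b = c + d) by lra. transitivity ((x - c) / d * c + (1 - (x - c) / d) * (m * b)); [ring|]. rewrite E. field. lra. }
    assert (Hc := Hconv c b t Kc Kb ltac:(lra) ltac:(cbv beta; rewrite Hpt; lra)).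
    cbv beta in Hc. rewrite Hpt in Hc. rewrite (rpow_pos t) in Hc by lra.
    unfold F'. rewrite Rabs_Ropp. exact Hc. }
  assert (HL2' : is_imp_hi (fun s => rpow (m * b - s) (theta - 1) * f s) c (m * b) L2).
  { apply (lo_to_hi (fun s => rpow (s - c) (theta - 1) * F s)); auto. lra.
    intros x. unfold F. replace (m * b - (c + m * b - x)) with (x - c) by ring. reflexivity. }
  rewrite Ec2 in HB2. rewrite Ec1 in HB1.
  unfold F in HB2. replace (c + m * b - m * b) with c in HB2 by ring.
  assert (EJ1 : J_left theta f c (m * a) = / Gamma theta * L1).
  { unfold J_left. rewrite (imp_lo_eq _ (m * a) c L1); auto. lra. }
  assert (EJ2 : J_right theta f c (m * b) = / Gamma theta * L2).
  { unfold J_right. rewrite (imp_hi_eq _ c (m * b) L2); auto. lra. }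
  destruct (Gamma_facts theta Hth) as [G1 G2].
  rewrite EJ1, EJ2, G1.
  assert (Hthp : 0 < theta * p + 1) by nra.
  rewrite (rpow_pos 2), (rpow_pos m), (rpow_pos (b - a)), (rpow_pos (1 / (theta * p + 1))) by
    (try apply Rdiv_lt_0_compat; lra).
  rewrite Rpower_mult_distr by lra.
  replace (m * (b - a)) with (2 * d) by (unfold d; field).
  rewrite <- Rpower_mult_distr by lra.
  rewrite Rpower_minus1 by lra.
  set (D := Rpower d theta). set (R2 := Rpower 2 theta).
  assert (HD : 0 < D) by apply Rpower_pos. assert (HR2 : 0 < R2) by apply Rpower_pos.
  assert (Key : forall Bx, 0 <= Bx ->
     Rpower (Rpower d (theta * p + 1) / (theta * p + 1)) (1 / p) *
       rpow (d * (A + alpha * m * Bx) / (alpha + 1)) (1 / q) =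
     D * d * Rpower (1 / (theta * p + 1)) (1 / p) * rpow ((A + alpha * m * Bx) / (alpha + 1)) (1 / q)).
  { intros Bx HBx.
    replace (Rpower d (theta * p + 1) / (theta * p + 1)) with (Rpower d (theta * p + 1) * (1 / (theta * p + 1))) by (field; lra).
    rewrite <- Rpower_mult_distr by (try apply Rpower_pos; apply Rdiv_lt_0_compat; lra).
    replace (d * (A + alpha * m * Bx) / (alpha + 1)) with (d * ((A + alpha * m * Bx) / (alpha + 1))) by (field; lra).
    rewrite rpow_mult_l.
    2: lra.
    2: { apply Rdiv_le_0_compat; [|lra]. assert (0 <= alpha * m * Bx) by (apply Rmult_le_pos; [apply Rmult_le_pos|]; lra). lra. }
    2: { assert (0 < 1 / q) by (apply Rdiv_lt_0_compat; lra). lra. }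
    rewrite Rpower_mult.
    assert (E : Rpower d ((theta * p + 1) * (1 / p)) * Rpower d (1 / q) = D * d).
    { rewrite <- Rpower_plus. replace ((theta * p + 1) * (1 / p) + 1 / q) with (theta + 1).
      rewrite Rpower_plus, Rpower_1 by lra. reflexivity.
      replace ((theta * p + 1) * (1 / p)) with (theta + 1 / p) by (field; lra). lra. }
    rewrite <- E. ring. }
  rewrite Key in HB1 by auto. rewrite Key in HB2 by auto.
  set (R' := Rpower (1 / (theta * p + 1)) (1 / p)) in *.
  set (S1 := rpow ((A + alpha * m * B1) / (alpha + 1)) (1 / q)) in *.
  set (S2 := rpow ((A + alpha * m * B2) / (alpha + 1)) (1 / q)) in *.
  change (Rpower d theta) with D in HB1, HB2.
  set (X1 := D * f c - theta * L1) in *. set (X2 := D * f c - theta * L2) in *.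
  assert (HG : Gamma theta <> 0) by lra.
  replace (f c - theta * Gamma theta * (R2 / 2) / (R2 * D) * (/ Gamma theta * L1 + / Gamma theta * L2))
    with ((X1 + X2) * / (2 * D)) by (unfold X1, X2; field; lra).
  rewrite Rabs_mult, (Rabs_pos_eq (/ (2 * D))) by (left; apply Rinv_0_lt_compat; lra).
  assert (T : Rabs (X1 + X2) <= D * d * R' * (S1 + S2)).
  { apply Rle_trans with (Rabs X1 + Rabs X2). apply Rabs_triang. rewrite Rmult_plus_distr_l. lra. }
  apply Rle_trans with (D * d * R' * (S1 + S2) * / (2 * D)).
  apply Rmult_le_compat_r. left; apply Rinv_0_lt_compat; lra. exact T.
  right. unfold d. field. lra.
Qed.
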